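(* Let $m$ be an odd positive integer and $\ell=\lceil\log_2 m\rceil$. If $\mathfrak K(m)>2^\ell+1$, then $\mathbf t_{m+1}\mathbf t_{m+2}=11$ and $\mathbf t_{2m+1}\mathbf t_{2m+2}=10$.
   Context: The Thue–Morse word is $\mathbf t=\mathbf t_1\mathbf t_2\cdots$ where $\mathbf t_i\in\{0,1\}$ has the parity of the number of $1$'s in the binary expansion of $i-1$. For positive integers $\alpha\le\beta$, $\langle\alpha,\beta\rangle=\mathbf t_\alpha\cdots\mathbf t_\beta$. A $k$-anti-power is a word $w_1\cdots w_k$ with $w_1,\dots,w_k$ pairwise distinct words of equal length. For a positive integer $m$, $\mathfrak K(m)$ is the smallest positive integer $k$ such that the prefix $\langle 1,km\rangle$ of $\mathbf t$ is not a $k$-anti-power. *)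

(* Defs.v *)
From mathcomp Require Import all_boot.
Set Implicit Arguments. Unset Strict Implicit. Unset Printing Implicit Defensive.

Fixpoint popcount_aux (fuel n : nat) : nat :=
  match fuel with
  | 0 => 0
  | f.+1 => if n is 0 then 0 else odd n + popcount_aux f n./2
  end.
Definition popcount (n : nat) : nat := popcount_aux n n.

(* Thue-Morse word, 1-indexed: t_i = parity of popcount (i-1) *)
Definition tm (i : nat) : bool := odd (popcount i.-1).

Definition factor (a b : nat) : seq bool := [seq tm i | i <- iota a (b.+1 - a)].

(* the j-th block (0-indexed) of length m of a prefix: <j*m+1, (j+1)*m> *)
Definition block (m j : nat) : seq bool := factor (j * m).+1 (j.+1 * m).

Definition prefix_anti_power (k m : nat) : Prop :=
  forall i j, i < k -> j < k -> block m i = block m j -> i = j.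

(* K(m) > N  <->  the least k >= 1 with <1,km> not a k-anti-power exceeds N,
   i.e. <1,km> is a k-anti-power for every 1 <= k <= N. *)
Definition K_gt (m N : nat) : Prop :=
  forall k, 0 < k -> k <= N -> prefix_anti_power k m.
Lemma tm_check : [seq tm i | i <- iota 1 8] = [:: false; true; true; false; true; false; false; true].
Proof. by []. Qed.
Lemma uplog_check : (up_log 2 1, up_log 2 3, up_log 2 4, up_log 2 5) = (0, 2, 2, 3).
Proof. by []. Qed.

(* Main.v *)
Require Import Defs.
From mathcomp Require Import all_boot.
From mathcomp Require Import zify.

Lemma half_lt n : n.+1./2 <= n.
Proof. have := odd_double_half n.+1; rewrite -muln2; case: (odd _) => /=; lia. Qed.

Lemma pc_aux_stable f g n : n <= f -> n <= g -> popcount_aux f n = popcount_aux g n.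
Proof.
elim: f g n => [|f IH] [|g] [|n] //= Hf Hg.
congr (_ + _); apply: IH.
- have := half_lt n; lia.
- have := half_lt n; lia.
Qed.

Lemma pc_rec n : popcount n = if n is 0 then 0 else odd n + popcount n./2.
Proof.
case: n => [|n] //. rewrite /popcount /=. congr (_ + _).
apply: pc_aux_stable => //; have := half_lt n; lia.
Qed.

Lemma pc_bit (c : bool) n : popcount (c + n.*2) = c + popcount n.
Proof.
case E: (c + n.*2) => [|x].
  by case: c E; case: n.
rewrite pc_rec -E half_bit_double oddD odd_double addbF.
by case: (c) E.
Qed.

Lemma pc_split k a b : b < 2 ^ k -> popcount (2 ^ k * a + b) = popcount a + popcount b.
Proof.
elim: k b => [|k IH] b Hb.
  have -> : b = 0 by move: Hb; rewrite expn0; lia.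
  by rewrite expn0 mul1n !addn0.
rewrite -(odd_double_half b) pc_bit.
have -> : 2 ^ k.+1 * a + (odd b + (b./2).*2) = odd b + (2 ^ k * a + b./2).*2.
  rewrite expnS -!muln2; lia.
rewrite pc_bit IH; first lia.
move: Hb; rewrite expnS -(odd_double_half b) -muln2; case: (odd b) => /=; lia.
Qed.

Definition TT n := odd (popcount n).

Lemma TT_split k a b : b < 2 ^ k -> TT (2 ^ k * a + b) = TT a (+) TT b.
Proof. by move=> H; rewrite /TT pc_split // oddD. Qed.

Lemma block_eq m j : block m j = [seq TT (j * m + i) | i <- iota 0 m].
Proof.
rewrite /block /factor.
have -> : (j.+1 * m).+1 - (j * m).+1 = m by rewrite mulSn; lia.
rewrite -(addn0 (j * m).+1) iotaDl -map_comp.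
apply: eq_map => i /=. by rewrite /tm /TT addSn.
Qed.

Theorem lemma3 (m : nat) (Hm : 0 < m) (Hodd : odd m) :
  K_gt m (2 ^ up_log 2 m + 1) ->
  (tm m.+1, tm m.+2) = (true, true) /\ (tm (2 * m).+1, tm (2 * m).+2) = (true, false).
Proof.
move=> HK.
set l := up_log 2 m.
have HP : prefix_anti_power (2 ^ l + 1) m by apply: HK => //; lia.
have Hml : m <= 2 ^ l by apply: up_logP.
have Hl0 : 0 < 2 ^ l by rewrite expn_gt0.
have tmE : forall n, tm n.+1 = TT n by [].
have T1 : TT m = true.
  apply/negP => /negP/negbTE Hm0.
  have : block m 0 = block m (2 ^ l).
    rewrite !block_eq; apply/eq_in_map => i; rewrite mem_iota => /andP[_ Hi].
    rewrite TT_split; last lia.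
    by rewrite Hm0.
  move/HP; have H1 : 0 < 2 ^ l + 1 by lia.
  have H2 : 2 ^ l < 2 ^ l + 1 by lia.
  move=> /(_ H1 H2); lia.
have T2 : TT m.+1 = true.
  apply/negP => /negP/negbTE Hm1.
  case: (ltnP 1 m) => Hm2; last first.
    have Em : m = 1 by lia.
    by rewrite Em in Hm1.
  have Hl1 : 0 < l by rewrite /l up_log_gt0 Hm2.
  have Hh : 2 ^ l.-1 < m by apply: up_log_gtn.
  have El : 2 ^ l = 2 * 2 ^ l.-1 by rewrite -expnS prednK.
  have : block m (2 ^ l.-1) = block m (2 ^ l).
    rewrite !block_eq; apply/eq_in_map => i; rewrite mem_iota => /andP[_ Hi].
    rewrite [in RHS]TT_split; last lia.
    case: (ltnP i (2 ^ l.-1)) => Hih.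
      by rewrite TT_split.
    have -> : 2 ^ l.-1 * m + i = 2 ^ l.-1 * m.+1 + (i - 2 ^ l.-1) by rewrite mulnS; lia.
    have Ei : i = 2 ^ l.-1 * 1 + (i - 2 ^ l.-1) by lia.
    rewrite TT_split; last lia.
    rewrite [in RHS]Ei TT_split; last lia.
    by rewrite Hm1 T1; case: (TT (i - _)).
  move/HP; have H1 : 2 ^ l.-1 < 2 ^ l + 1 by lia.
  have H2 : 2 ^ l < 2 ^ l + 1 by lia.
  move=> /(_ H1 H2); lia.
split; first by rewrite !tmE T1 T2.
rewrite !tmE.
have -> : (2 * m) = 2 ^ 1 * m + 0 by lia.
have -> : (2 ^ 1 * m + 0).+1 = 2 ^ 1 * m + 1 by lia.
by rewrite !TT_split // T1.
Qed.
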